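(* Let $\Bbbk$ be a commutative unital ring and $n \geq 1$, $d \geq 2$ integers. Define $\ell$ on the basis of $NC_A(n,d)$ from Theorem B by $\ell(T_w) = \ell_{A_{n-1}}(w)$ and $\ell(T_w T_n^k T_{n-1}\cdots T_m) = \ell_{A_{n-1}}(w) + k + n - m$ for $w \in S_n$, $k \in [1,d-1]$, $m \in [1,n]$. Then: (1) For every word $T_{i_1}\cdots T_{i_l}$ (with $i_j \in [1,n]$) that is nonzero in $NC_A(n,d)$, this word equals a single basis element $b$ of the form above, and $\ell(b) = l$. (2) There is a unique basis element of maximal $\ell$-value, namely $T_{w'_\circ} T_n^{d-1} T_{n-1}\cdots T_1$, of length $l_{n,d} := \ell_{A_{n-1}}(w'_\circ) + d + n - 2$; in particular every nonzero word in the $T_i$ has length at most $l_{n,d}$. (3) If $\Bbbk$ is a field, $NC_A(n,d)$ is a local algebra whose unique maximal ideal $\mathfrak{m}$ is the two-sided ideal generated by $T_1,\dots,T_n$. For every $\Bbbk$, this ideal $\mathfrak{m}$ satisfies $\mathfrak{m}^{1+l_{n,d}} = 0$.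
   Context: $NC_A(n,d)$ is the $\Bbbk$-algebra generated by $T_1,\dots,T_n$ with relations $T_iT_{i+1}T_i = T_{i+1}T_iT_{i+1}$ for $0<i<n$, $T_iT_j = T_jT_i$ for $|i-j|>1$, $T_1^2 = \cdots = T_{n-1}^2 = 0$, and $T_n^d = 0$. For $w \in S_n$ with reduced expression $w = s_{i_1}\cdots s_{i_r}$ in simple transpositions, $T_w := T_{i_1}\cdots T_{i_r}$; $\ell_{A_{n-1}}$ is the Coxeter length on $S_n$, and $w'_\circ$ is the longest element of $S_n$. By Theorem B the elements $T_w$ ($w \in S_n$) and $T_wT_n^kT_{n-1}\cdots T_m$ ($w\in S_n$, $k\in[1,d-1]$, $m\in[1,n]$) form a $\Bbbk$-basis of $NC_A(n,d)$. *)

(* Defs.v *)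
From HB Require Import structures.
From mathcomp Require Import all_boot all_order all_algebra all_fingroup.
From Stdlib Require Import ClassicalEpsilon.
Set Implicit Arguments. Unset Strict Implicit. Unset Printing Implicit Defensive.
Import GRing.Theory.

(* simple transposition s_i = (i i+1) of {1..n}, for 1 <= i <= n-1;
   on 'I_n (0-based) it swaps i-1 and i. *)
Definition sref (n i : nat) : 'S_n :=
  match n return 'S_n with
  | 0 => 1%g
  | n'.+1 => tperm (inord i.-1 : 'I_n'.+1) (inord i)
  end.

Definition permOf (n : nat) (u : seq nat) : 'S_n := (\prod_(i <- u) sref n i)%g.

Definition is_expr (n : nat) (w : 'S_n) (u : seq nat) : Prop :=
  all (fun i => 0 < i < n) u /\ permOf n u = w.

Definition is_redexpr (n : nat) (w : 'S_n) (u : seq nat) : Prop :=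
  is_expr w u /\ forall u', is_expr w u' -> size u <= size u'.

Definition redword (n : nat) (w : 'S_n) : seq nat :=
  epsilon (inhabits [::]) (is_redexpr w).

Definition coxlen (n : nat) (w : 'S_n) : nat := size (redword w).

Definition longest (n : nat) : 'S_n := [arg max_(w > 1%g) coxlen w].

Local Open Scope ring_scope.

Definition word (A : pzRingType) (t : nat -> A) (u : seq nat) : A :=
  \prod_(i <- u) t i.

Definition NC_rels (B : pzRingType) (n d : nat) (t : nat -> B) : Prop :=
  [/\ (forall i, (0 < i < n)%N -> t i * t i.+1 * t i = t i.+1 * t i * t i.+1),
      (forall i j, (0 < i <= n)%N -> (0 < j <= n)%N -> ((i.+1 < j) || (j.+1 < i))%N ->
                   t i * t j = t j * t i),
      (forall i, (0 < i < n)%N -> t i * t i = 0) &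
      t n ^+ d = 0].

(* phi : k -> A makes A a k-algebra (phi lands in the centre) *)
Definition central_map (R : comPzRingType) (A : pzRingType)
  (phi : {rmorphism R -> A}) : Prop := forall r x, phi r * x = x * phi r.

(* (A, phi, t) is the k-algebra generated by t_1..t_n subject to the
   relations of NC_A(n,d), i.e. the algebra presented by these generators
   and relations: the relations hold, A is generated as a k-algebra
   by the t_i, and (A, t) has the universal property. *)
Definition is_NC_A (R : comPzRingType) (n d : nat) (A : pzRingType)
  (phi : {rmorphism R -> A}) (t : nat -> A) : Prop :=
  [/\ central_map phi,
      NC_rels n d t,
      (forall a : A, exists c : seq (R * seq nat),
          all (fun p => all (fun i => (0 < i <= n)%N) p.2) c /\
          a = \sum_(p <- c) phi p.1 * word t p.2) &
      (forall (B : pzRingType) (psi : {rmorphism R -> B}) (s : nat -> B),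
          central_map psi -> NC_rels n d s ->
          exists f : {rmorphism A -> B},
            (forall r, f (phi r) = psi r) /\
            (forall i, (0 < i <= n)%N -> f (t i) = s i))].

(* index of a basis element: inl w  ~  T_w ;
   inr (w, k, m)  ~  T_w T_n^k T_{n-1} ... T_m *)
Definition bindex (n : nat) : Type := ('S_n + ('S_n * nat * nat))%type.

Definition valid_bindex (n d : nat) (b : bindex n) : bool :=
  match b with
  | inl _ => true
  | inr (_, k, m) => ((0 < k <= d.-1) && (0 < m <= n))%N
  end.

Definition tailword (n k m : nat) : seq nat := nseq k n ++ rev (iota m (n - m)%N).

Definition basis_elt (n : nat) (A : pzRingType) (t : nat -> A) (b : bindex n) : A :=
  match b with
  | inl w => word t (redword w)
  | inr (w, k, m) => word t (redword w ++ tailword n k m)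
  end.

Definition ell (n : nat) (b : bindex n) : nat :=
  match b with
  | inl w => coxlen w
  | inr (w, k, m) => (coxlen w + k + (n - m))%N
  end.

Definition top_bindex (n d : nat) : bindex n := inr (longest n, d.-1, 1).

Definition lnd (n d : nat) : nat := (coxlen (longest n) + d + n - 2)%N.

Definition left_ideal (A : pzRingType) (I : A -> Prop) : Prop :=
  [/\ I 0, (forall x y, I x -> I y -> I (x + y)) & (forall a x, I x -> I (a * x))].

Definition max_left_ideal (A : pzRingType) (I : A -> Prop) : Prop :=
  [/\ left_ideal I, ~ I 1 &
      forall J : A -> Prop, left_ideal J -> ~ J 1 ->
        (forall x, I x -> J x) -> forall x, J x -> I x].

Definition local_with_max (A : pzRingType) (m : A -> Prop) : Prop :=
  max_left_ideal m /\
  forall J : A -> Prop, max_left_ideal J -> forall x, J x <-> m x.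

Definition gen_ideal (A : pzRingType) (n : nat) (t : nat -> A) (x : A) : Prop :=
  exists s : seq (A * nat * A),
    (forall p, List.In p s -> (0 < p.1.2 <= n)%N) /\
    x = \sum_(p <- s) p.1.1 * t p.1.2 * p.2.

Definition ideal_pow (A : pzRingType) (I : A -> Prop) (N : nat) (x : A) : Prop :=
  exists s : seq (seq A),
    (forall xs, List.In xs s -> size xs = N /\ forall y, List.In y xs -> I y) /\
    x = \sum_(xs <- s) \prod_(y <- xs) y.

(* Main.v *)
Require Import Defs.
From HB Require Import structures.
From mathcomp Require Import all_boot all_order all_algebra all_fingroup.
From mathcomp Require Import zify.
From Stdlib Require Import ClassicalEpsilon.
Import GRing.Theory.
Set Implicit Arguments. Unset Strict Implicit. Unset Printing Implicit Defensive.

Lemma inordv m k : k < m.+1 -> nat_of_ord (inord k : 'I_m.+1) = k.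
Proof. exact: inordK. Qed.

Lemma sref_val m i (x : 'I_m.+1) : 0 < i < m.+1 ->
  nat_of_ord (sref m.+1 i x) = if nat_of_ord x == i.-1 then i else if nat_of_ord x == i then i.-1 else x.
Proof.
move=> /andP[i0 im]; rewrite /sref.
have h1 : nat_of_ord (inord i.-1 : 'I_m.+1) = i.-1 by rewrite inordK //; lia.
have h2 : nat_of_ord (inord i : 'I_m.+1) = i by rewrite inordK.
case: tpermP => [->|->|hx hy]; rewrite ?h1 ?h2 ?eqxx //.
  by have -> : (i == i.-1) = false by apply/eqP; lia.
have hx' : nat_of_ord x <> i.-1 by move=> e; apply: hx; apply/val_inj; rewrite /= h1.
have hy' : nat_of_ord x <> i by move=> e; apply: hy; apply/val_inj; rewrite /= h2.
by case: eqP => //; case: eqP.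
Qed.

Lemma sref_invol m i : (sref m.+1 i * sref m.+1 i = 1)%g.
Proof. by rewrite /sref tperm2. Qed.

Lemma sref_lt m i (u v : 'I_m.+1) : 0 < i < m.+1 -> u != v ->
  (sref m.+1 i v < sref m.+1 i u) =
  ((v < u) (+) (((nat_of_ord u == i.-1) && (nat_of_ord v == i)) || ((nat_of_ord u == i) && (nat_of_ord v == i.-1)))).
Proof.
move=> hi huv; rewrite !sref_val //.
have : nat_of_ord u != nat_of_ord v by [].
move: (nat_of_ord u) (nat_of_ord v) => a b; case/andP: hi => h0 h1 hab.
by case: (a =P i.-1); case: (a =P i); case: (b =P i.-1); case: (b =P i) => /=; lia.
Qed.

Definition invs m (w : 'S_m.+1) : {set 'I_m.+1 * 'I_m.+1} :=
  [set p : 'I_m.+1 * 'I_m.+1 | (p.1 < p.2) && (w p.2 < w p.1)].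
Definition ninv m (w : 'S_m.+1) := #|invs w|.
Definition desc m (w : 'S_m.+1) i := (w^-1)%g (inord i) < (w^-1)%g (inord i.-1).
Definition epair m (w : 'S_m.+1) i : 'I_m.+1 * 'I_m.+1 :=
  let p := (w^-1)%g (inord i.-1) in let q := (w^-1)%g (inord i) in
  if p < q then (p, q) else (q, p).

Lemma perm_val_eq m (w : 'S_m.+1) z k : k < m.+1 ->
  (nat_of_ord (w z) == k) = (z == (w^-1)%g (inord k)).
Proof.
move=> hk; rewrite -(inj_eq (@perm_inj _ w)) permKV -val_eqE /= inordK //.
Qed.

Lemma epair_neq m (w : 'S_m.+1) i : 0 < i < m.+1 ->
  (w^-1)%g (inord i.-1) != (w^-1)%g (inord i).
Proof.
move=> /andP[h0 h1]; rewrite (inj_eq (@perm_inj _ _)) -val_eqE /= !inordK //; lia.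
Qed.

Lemma in_invs_mul m (w : 'S_m.+1) i x y : 0 < i < m.+1 ->
  ((x, y) \in invs (w * sref m.+1 i)%g) = ((x, y) \in invs w) (+) ((x, y) == epair w i).
Proof.
move=> hi; have hne := epair_neq w hi.
have hi1 : i.-1 < m.+1 by case/andP: hi => ? ?; lia.
have hi2 : i < m.+1 by case/andP: hi.
rewrite !inE /= !permM /epair.
case: (ltnP x y) => hxy /=.
  have hneq : w x != w y by rewrite (inj_eq (@perm_inj _ _)) neq_ltn hxy.
  rewrite sref_lt //; congr (_ (+) _).
  rewrite !perm_val_eq //.
  move: hne hxy; move: ((w^-1)%g (inord i.-1)) ((w^-1)%g (inord i)) => p q hne hxy.
  rewrite neq_ltn in hne.
  case: ifP => hpq; rewrite xpair_eqE;
  case: (x =P p) => ?; case: (x =P q) => ?; case: (y =P p) => ?; case: (y =P q) => ? //=;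
  subst; rewrite ?ltnn ?eqxx //= in hne hxy hpq *; try lia.
move: hne; move: ((w^-1)%g (inord i.-1)) ((w^-1)%g (inord i)) => p q hne.
case: ifP => hpq; rewrite xpair_eqE; apply/esym/negbTE;
  apply/negP => /andP[/eqP ex /eqP ey]; subst x y.
  by rewrite ltnNge hxy in hpq.
rewrite neq_ltn hpq /= in hne; by rewrite ltnNge hxy in hne.
Qed.

Lemma epair_in m (w : 'S_m.+1) i : 0 < i < m.+1 -> (epair w i \in invs w) = desc w i.
Proof.
move=> hi; have hne := epair_neq w hi.
have hi1 : i.-1 < m.+1 by case/andP: hi => ? ?; lia.
have hi2 : i < m.+1 by case/andP: hi.
rewrite /epair /desc; case: ifP => hpq; rewrite inE /= !permKV !inordK //.
  by rewrite hpq /= (leq_gtF (ltnW hpq)) ltnNge leq_pred.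
rewrite neq_ltn hpq /= in hne; rewrite hne /=; case/andP: hi => ? ?; lia.
Qed.

Lemma invs_mul m (w : 'S_m.+1) i : 0 < i < m.+1 ->
  invs (w * sref m.+1 i)%g =
  if desc w i then invs w :\ epair w i else epair w i |: invs w.
Proof.
move=> hi; rewrite -epair_in //; apply/setP => [[x y]].
rewrite in_invs_mul //.
case: (eqVneq (x, y) (epair w i)) => [e|ne].
  by rewrite e; case: ifP => h; rewrite !inE ?eqxx ?h.
by case: ifP => h; rewrite !inE (negbTE ne) ?addbF.
Qed.

Lemma ninv_desc m (w : 'S_m.+1) i : 0 < i < m.+1 -> desc w i ->
  ninv w = (ninv (w * sref m.+1 i)%g).+1.
Proof.
move=> hi hd; rewrite /ninv invs_mul // hd (cardsD1 (epair w i)) epair_in // hd /nat_of_bool add1n //.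
Qed.

Lemma ninv_asc m (w : 'S_m.+1) i : 0 < i < m.+1 -> ~~ desc w i ->
  ninv (w * sref m.+1 i)%g = (ninv w).+1.
Proof.
move=> hi hd; rewrite /ninv invs_mul // (negbTE hd) cardsU1 epair_in // hd /nat_of_bool add1n //.
Qed.

Lemma ninv1 m : ninv (1%g : 'S_m.+1) = 0.
Proof.
apply/eqP; rewrite cards_eq0; apply/eqP/setP => [[x y]]; rewrite !inE /= !perm1.
by apply/negbTE; apply/negP => /andP[h1 h2]; move: (ltn_trans h1 h2); rewrite ltnn.
Qed.

Lemma sref_inord m b k : 0 < b < m.+1 -> k < m.+1 ->
  sref m.+1 b (inord k) = inord (if k == b.-1 then b else if k == b then b.-1 else k).
Proof.
move=> hb hk; apply/val_inj; rewrite /= sref_val // inordK //.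
case/andP: hb => h0 h1; rewrite inordK //; case: eqP => //; case: eqP => //; lia.
Qed.

Lemma inv_mul_app m (w : 'S_m.+1) b x :
  ((w * sref m.+1 b)^-1)%g x = (w^-1)%g (sref m.+1 b x).
Proof. by rewrite invMg permM; case: m w x => [|m] w x; rewrite /sref tpermV. Qed.

Lemma mulss m (y : 'S_m.+1) a : (y * sref m.+1 a * sref m.+1 a)%g = y.
Proof. by rewrite -mulgA sref_invol mulg1. Qed.

Lemma desc_far m (w : 'S_m.+1) a b : 0 < a < m.+1 -> 0 < b < m.+1 ->
  (a.+1 < b) || (b.+1 < a) -> desc w a -> desc (w * sref m.+1 b)%g a.
Proof.
move=> ha hb hab; have [? ?] := andP ha; have [? ?] := andP hb.
rewrite /desc !inv_mul_app !sref_inord //; try lia.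
have -> : (a == b.-1) = false by apply/eqP; lia.
have -> : (a == b) = false by apply/eqP; lia.
have -> : (a.-1 == b.-1) = false by apply/eqP; lia.
by have -> : (a.-1 == b) = false by apply/eqP; lia.
Qed.

Lemma sref_fix m b k : 0 < b < m.+1 -> k < m.+1 -> k != b.-1 -> k != b ->
  sref m.+1 b (inord k) = inord k.
Proof. by move=> hb hk h1 h2; rewrite sref_inord // (negbTE h1) (negbTE h2). Qed.

Lemma sref_lo m b : 0 < b < m.+1 -> sref m.+1 b (inord b.-1) = inord b.
Proof. by move=> hb; rewrite sref_inord ?eqxx //; case/andP: hb => ? ?; lia. Qed.

Lemma sref_hi m b : 0 < b < m.+1 -> sref m.+1 b (inord b) = inord b.-1.
Proof.
move=> hb; rewrite sref_inord ?eqxx //; last by case/andP: hb.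
by have -> : (b == b.-1) = false by apply/eqP; case/andP: hb => ? ?; lia.
Qed.

Lemma desc_braid m (w : 'S_m.+1) a : 0 < a -> a.+1 < m.+1 -> desc w a -> desc w a.+1 ->
  desc (w * sref m.+1 a)%g a.+1 /\ desc (w * sref m.+1 a * sref m.+1 a.+1)%g a.
Proof.
move=> h0 h1; have ha : 0 < a < m.+1 by apply/andP; split; lia.
have ha1 : 0 < a.+1 < m.+1 by apply/andP; split; lia.
rewrite /desc !inv_mul_app /=.
rewrite (sref_fix ha) //; try (apply/eqP; lia).
rewrite (sref_hi ha) (sref_lo ha1) (sref_fix ha) //; try (apply/eqP; lia).
rewrite (sref_fix ha1) //; try (apply/eqP; lia); try lia.
rewrite (sref_lo ha).
move=> d1 d2; split; last by [].
exact: ltn_trans d2 d1.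
Qed.

Ltac crush := repeat (match goal with |- context [?c == ?d] =>
  lazymatch c with context [if _ then _ else _] => fail | _ =>
  lazymatch d with context [if _ then _ else _] => fail | _ =>
  case: (c =P d); intro end end end); lia.
Lemma ord_eq n (x y : 'I_n) : nat_of_ord x = nat_of_ord y -> x = y.
Proof. exact: val_inj. Qed.

Lemma sref_comm m a b : 0 < a < m.+1 -> 0 < b < m.+1 -> (a.+1 < b) || (b.+1 < a) ->
  (sref m.+1 a * sref m.+1 b = sref m.+1 b * sref m.+1 a)%g.
Proof.
move=> ha hb hab; apply/permP => x; apply: ord_eq; rewrite !permM !sref_val //.
move: (nat_of_ord x) => k; have [? ?] := andP ha; have [? ?] := andP hb.
by case: (k =P a.-1); intro; case: (k =P a); intro; case: (k =P b.-1); intro; case: (k =P b); intro; rewrite /=; crush.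
Qed.

Lemma sref_braid m a : 0 < a -> a.+1 < m.+1 ->
  (sref m.+1 a * sref m.+1 a.+1 * sref m.+1 a = sref m.+1 a.+1 * sref m.+1 a * sref m.+1 a.+1)%g.
Proof.
move=> h0 h1; have ha : 0 < a < m.+1 by apply/andP; split; lia.
have ha1 : 0 < a.+1 < m.+1 by apply/andP; split; lia.
apply/permP => x; apply: ord_eq; rewrite !permM !sref_val //.
move: (nat_of_ord x) => k.
by case: (k =P a.-1); intro; case: (k =P a); intro; case: (k =P a.+1); intro; rewrite /=; crush.
Qed.

Lemma far_id m (y : 'S_m.+1) a b : 0 < a < m.+1 -> 0 < b < m.+1 -> (a.+1 < b) || (b.+1 < a) ->
  (y * sref m.+1 a * sref m.+1 b * sref m.+1 a * sref m.+1 b = y)%g.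
Proof.
move=> ha hb hab.
have -> : (y * sref m.+1 a * sref m.+1 b * sref m.+1 a * sref m.+1 b =
  y * sref m.+1 a * sref m.+1 b * (sref m.+1 a * sref m.+1 b))%g by rewrite !mulgA.
by rewrite (sref_comm ha hb hab) mulgA mulss mulss.
Qed.

Lemma braid_id m (y : 'S_m.+1) a : 0 < a -> a.+1 < m.+1 ->
  (y * sref m.+1 a * sref m.+1 a.+1 * sref m.+1 a * sref m.+1 a.+1 * sref m.+1 a * sref m.+1 a.+1 = y)%g.
Proof.
move=> h0 h1.
have e : (y * sref m.+1 a * sref m.+1 a.+1 * sref m.+1 a * sref m.+1 a.+1 * sref m.+1 a * sref m.+1 a.+1
   = y * (sref m.+1 a * sref m.+1 a.+1 * sref m.+1 a) * (sref m.+1 a.+1 * sref m.+1 a * sref m.+1 a.+1))%g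
  by rewrite !mulgA.
rewrite e -(sref_braid h0 h1) !mulgA.
by rewrite mulss -(mulgA (y * _)%g) sref_invol mulg1 mulss.
Qed.

Lemma permOf_rcons n u a : permOf n (rcons u a) = (permOf n u * sref n a)%g.
Proof. by rewrite /permOf -cats1 big_cat big_seq1. Qed.

Lemma permOf_nil n : permOf n [::] = 1%g.
Proof. by rewrite /permOf big_nil. Qed.

Definition red m (w : 'S_m.+1) u :=
  [/\ all (fun i => 0 < i < m.+1) u, permOf m.+1 u = w & size u = ninv w].

Lemma ninv_step m (y : 'S_m.+1) a : 0 < a < m.+1 ->
  ninv (y * sref m.+1 a)%g = (ninv y).+1 \/ ninv y = (ninv (y * sref m.+1 a)%g).+1.
Proof.
move=> ha; case: (boolP (desc y a)) => h.
  by right; apply: ninv_desc.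
by left; apply: ninv_asc.
Qed.

Lemma ninv_le m u : all (fun i => 0 < i < m.+1) u -> ninv (permOf m.+1 u) <= size u.
Proof.
elim/last_ind: u => [|u a IH]; first by rewrite permOf_nil ninv1.
rewrite all_rcons => /andP[ha hu]; rewrite permOf_rcons size_rcons.
have := IH hu; case: (ninv_step (permOf m.+1 u) ha) => ->; lia.
Qed.

Lemma red_rcons m (w : 'S_m.+1) u a : red w (rcons u a) ->
  desc w a /\ red (w * sref m.+1 a)%g u.
Proof.
case=> hall hp hs; move: hall; rewrite all_rcons => /andP[ha hu].
have hw : (w * sref m.+1 a)%g = permOf m.+1 u by rewrite -hp permOf_rcons mulss.
have hle := ninv_le hu; rewrite -hw in hle.
rewrite size_rcons in hs.
case: (boolP (desc w a)) => hd.
  split => //; split => //; have := ninv_desc ha hd; lia.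
have := ninv_asc ha hd; lia.
Qed.

Lemma red_expr m (w : 'S_m.+1) u :
  all (fun i => 0 < i < m.+1) u -> permOf m.+1 u = w -> size u = ninv w -> red w u.
Proof. by move=> *; split. Qed.

Lemma incr_id m (g : nat -> nat) : (forall j, j <= m -> g j <= m) ->
  (forall j, 0 < j <= m -> g j.-1 < g j) -> forall j, j <= m -> g j = j.
Proof.
move=> hb hinc.
have lo : forall j, j <= m -> j <= g j.
  elim=> [|j IH] hj //; have := hinc j.+1 (ltac:(lia)); have := IH (ltac:(lia)) => /=; lia.
have hi : forall k, k <= m -> g (m - k) <= m - k.
  elim=> [|k IH] hk; first by rewrite subn0; apply: hb.
  have := hinc (m - k) (ltac:(lia)); have := IH (ltac:(lia)).
  have -> : (m - k).-1 = m - k.+1 by lia.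
  lia.
move=> j hj; have := lo j hj; have := hi (m - j) (leq_subr _ _); rewrite subKn //; lia.
Qed.

Definition gof m (w : 'S_m.+1) (j : nat) : nat := nat_of_ord ((w^-1)%g (inord j)).

Lemma gof_bound m (w : 'S_m.+1) j : gof w j <= m.
Proof. by rewrite /gof -ltnS ltn_ord. Qed.

Lemma gof_neq m (w : 'S_m.+1) j : 0 < j <= m -> gof w j.-1 != gof w j.
Proof.
move=> hj; rewrite /gof; apply/negP => /eqP e.
have := (@perm_inj _ (w^-1)%g _ _ (val_inj e)) => /(congr1 val) /=; rewrite !inordK; lia.
Qed.

Lemma perm_of_gof m (w w' : 'S_m.+1) : (forall j, j <= m -> gof w j = gof w' j) -> w = w'.
Proof.
move=> h; apply: (@invg_inj _ w w'); apply/permP => x; apply: val_inj => /=.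
have := h x (ltac:(have := ltn_ord x; lia)); rewrite /gof inord_val; done.
Qed.

Lemma nodesc_id m (w : 'S_m.+1) : (forall a, 0 < a < m.+1 -> ~~ desc w a) -> w = 1%g.
Proof.
move=> h; apply: perm_of_gof => j hj.
have e : forall w0 : 'S_m.+1, (forall a, 0 < a < m.+1 -> ~~ desc w0 a) -> gof w0 j = j.
  move=> w0 h0; apply: (@incr_id m (gof w0) (fun k _ => gof_bound w0 k)) => // k hk.
  have := h0 k (ltac:(lia)); rewrite /desc -leqNgt -/(gof w0 k.-1) -/(gof w0 k) => hle.
  by rewrite ltn_neqAle gof_neq.
rewrite (e w h) e // => a ha; rewrite /desc invg1 !perm1 !inordK; lia.
Qed.

Lemma alldesc_uniq m (w w' : 'S_m.+1) : (forall a, 0 < a < m.+1 -> desc w a) ->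
  (forall a, 0 < a < m.+1 -> desc w' a) -> w = w'.
Proof.
move=> h h'; apply: perm_of_gof => j hj.
have e : forall w0 : 'S_m.+1, (forall a, 0 < a < m.+1 -> desc w0 a) -> gof w0 j = m - j.
  move=> w0 h0; have hb := gof_bound w0.
  have hinc : forall k, 0 < k <= m -> m - gof w0 k.-1 < m - gof w0 k.
    move=> k hk; have := h0 k (ltac:(lia)); rewrite /desc -/(gof w0 k.-1) -/(gof w0 k).
    have := hb k; have := hb k.-1; lia.
  have := @incr_id m (fun k => m - gof w0 k) (fun k _ => leq_subr _ _) hinc j hj.
  have := hb j; simpl; lia.
by rewrite (e w h) (e w' h').
Qed.

Lemma exists_red m : forall k (w : 'S_m.+1), ninv w = k -> exists u, red w u.
Proof.
elim=> [|k IH] w hk.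
  have nd : forall a, 0 < a < m.+1 -> ~~ desc w a.
    by move=> a ha; apply/negP => hd; have := ninv_desc ha hd; lia.
  exists [::]; rewrite (nodesc_id nd); split => //; first by rewrite permOf_nil.
  by rewrite ninv1.
have [/existsP [a /andP[a0 hd]] | hno] := boolP [exists a : 'I_m.+1, (0 < a) && desc w a].
  have ha : 0 < a < m.+1 by rewrite a0 ltn_ord.
  have hv := ninv_desc ha hd.
  have [u [hu1 hu2 hu3]] := IH (w * sref m.+1 a)%g (ltac:(lia)).
  exists (rcons u a); split.
  - by rewrite all_rcons ha.
  - by rewrite permOf_rcons hu2 mulss.
  - by rewrite size_rcons hu3; lia.
have nd : forall a, 0 < a < m.+1 -> ~~ desc w a.
  move=> a /andP[a0 am]; apply/negP => hd; move/existsP: hno; apply.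
  by exists (Ordinal am); rewrite /= a0 hd.
by move: hk; rewrite (nodesc_id nd) ninv1.
Qed.

Lemma redword_red m (w : 'S_m.+1) : red w (redword w).
Proof.
have [u [hu1 hu2 hu3]] := exists_red (erefl (ninv w)).
have ex : exists u, is_redexpr w u.
  exists u; split; first by split.
  move=> u' [h1 h2]; rewrite hu3 -h2; exact: ninv_le.
have := epsilon_spec (inhabits [::]) _ ex; rewrite -/(redword w).
move=> [[h1 h2] hmin]; split => //.
have := hmin u (conj hu1 hu2); have := ninv_le h1; rewrite h2 hu3; lia.
Qed.

Lemma coxlen_ninv m (w : 'S_m.+1) : coxlen w = ninv w.
Proof. by case: (redword_red w). Qed.

Lemma longest_max m (w : 'S_m.+1) : ninv w <= ninv (longest m.+1).
Proof.
rewrite -!coxlen_ninv /longest.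
by case: (@arg_maxnP _ 1%g (fun _ => true) (@coxlen m.+1) isT) => L _ hL; apply: hL.
Qed.

Lemma max_alldesc m (w : 'S_m.+1) : ninv w = ninv (longest m.+1) ->
  forall a, 0 < a < m.+1 -> desc w a.
Proof.
move=> e a ha; apply/negPn/negP => hd.
have := ninv_asc ha hd; have := longest_max (w * sref m.+1 a)%g; lia.
Qed.

Lemma longest_uniq m (w : 'S_m.+1) : ninv w = ninv (longest m.+1) -> w = longest m.+1.
Proof.
move=> e; apply: alldesc_uniq; first exact: max_alldesc.
exact: max_alldesc.
Qed.

Definition word_far (A : pzRingType) (N : nat) (t : nat -> A) :=
  forall i j, 0 < i <= N -> 0 < j <= N -> (i.+1 < j) || (j.+1 < i) -> (t i * t j = t j * t i)%R.
Definition word_braid (A : pzRingType) (N : nat) (t : nat -> A) :=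
  forall i, 0 < i < N -> (t i * t i.+1 * t i = t i.+1 * t i * t i.+1)%R.

Lemma word_cat (A : pzRingType) (t : nat -> A) u v : word t (u ++ v) = (word t u * word t v)%R.
Proof. by rewrite /word big_cat. Qed.

Lemma word_rcons (A : pzRingType) (t : nat -> A) u a : word t (rcons u a) = (word t u * t a)%R.
Proof. by rewrite -cats1 word_cat /word big_seq1. Qed.

Lemma word_nil (A : pzRingType) (t : nat -> A) : word t [::] = 1%R.
Proof. by rewrite /word big_nil. Qed.

Lemma braid_case m (A : pzRingType) (t : nat -> A) k
  (hb : word_braid m.+1 t)
  (IH : forall (w : 'S_m.+1) u v, size u = k -> red w u -> red w v -> word t u = word t v)
  (w : 'S_m.+1) u' v' a :
  0 < a -> a.+1 < m.+1 -> size u' = k -> size v' = k ->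
  red w (rcons u' a) -> red w (rcons v' a.+1) ->
  word t (rcons u' a) = word t (rcons v' a.+1).
Proof.
move=> h0 h1 su sv ru rv.
have ha : 0 < a < m.+1 by apply/andP; split; lia.
have ha1 : 0 < a.+1 < m.+1 by apply/andP; split; lia.
have [d1 ru'] := red_rcons ru; have [d2 rv'] := red_rcons rv.
have [d3 d4] := desc_braid h0 h1 d1 d2.
have n1 := ninv_desc ha d1.
have n2 := ninv_desc ha1 d3.
have n3 := ninv_desc ha d4.
set w3 := (w * sref m.+1 a * sref m.+1 a.+1 * sref m.+1 a)%g in n3.
have [x [hx1 hx2 hx3]] := exists_red (erefl (ninv w3)).
have rw1 : red w (rcons (rcons (rcons x a) a.+1) a).
  split.
  - by rewrite !all_rcons ha ha1 hx1.
  - by rewrite !permOf_rcons hx2 /w3 !mulss.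
  - by rewrite !size_rcons hx3; case: ru => _ _; rewrite size_rcons; lia.
have rw2 : red w (rcons (rcons (rcons x a.+1) a) a.+1).
  split.
  - by rewrite !all_rcons ha ha1 hx1.
  - rewrite !permOf_rcons hx2 /w3.
    have -> : (w * sref m.+1 a * sref m.+1 a.+1 * sref m.+1 a * sref m.+1 a.+1 * sref m.+1 a * sref m.+1 a.+1
       = w * sref m.+1 a * sref m.+1 a.+1 * sref m.+1 a * (sref m.+1 a.+1 * sref m.+1 a * sref m.+1 a.+1))%g
      by rewrite !mulgA.
    by rewrite -sref_braid // !mulgA mulss -(mulgA (w * _)%g) sref_invol mulg1 mulss.
  - by rewrite !size_rcons hx3; case: ru => _ _; rewrite size_rcons; lia.
have [_ r1] := red_rcons rw1; have [_ r2] := red_rcons rw2.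
rewrite !word_rcons (IH _ _ _ su ru' r1) (IH _ _ _ sv rv' r2) !word_rcons -!mulrA.
by congr (_ * _)%R; rewrite !mulrA hb.
Qed.

Lemma matsumoto m (A : pzRingType) (t : nat -> A)
  (hb : word_braid m.+1 t) (hc : word_far m.+1 t) :
  forall k (w : 'S_m.+1) u v, size u = k -> red w u -> red w v -> word t u = word t v.
Proof.
elim=> [|k IH] w u v su ru rv.
  move/size0nil: su => eu; subst u.
  case: ru => _ _ hs; case: rv => _ _ hs'.
  by have /size0nil -> : size v = 0 by rewrite hs' -hs.
have sv : size v = k.+1 by case: rv => _ _ ->; case: ru => _ _ <-.
case/lastP: u su ru => [//|u' a] su ru.
case/lastP: v sv rv => [//|v' b] sv rv.
move: su sv; rewrite !size_rcons => -[su] [sv].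
have ha : 0 < a < m.+1 by case: ru => + _ _; rewrite all_rcons => /andP[].
have hb' : 0 < b < m.+1 by case: rv => + _ _; rewrite all_rcons => /andP[].
have [d1 ru'] := red_rcons ru; have [d2 rv'] := red_rcons rv.
have : (a == b) || ((a.+1 < b) || (b.+1 < a)) || (b == a.+1) || (a == b.+1).
  case/andP: ha => ? ?; case/andP: hb' => ? ?; lia.
case/orP => [/orP[/orP[/eqP eab|hab]|/eqP eb]|/eqP ea].
- by subst b; rewrite !word_rcons (IH _ _ _ su ru' rv').
- have hba : (b.+1 < a) || (a.+1 < b) by rewrite orbC.
  have d3 := desc_far hb' ha hba d2.
  have n1 := ninv_desc ha d1.
  have n2 := ninv_desc hb' d3.
  have [x [hx1 hx2 hx3]] := exists_red (erefl (ninv (w * sref m.+1 a * sref m.+1 b)%g)).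
  have sz : size x = k.-1 by case: ru => _ _; rewrite size_rcons; lia.
  have rw1 : red w (rcons (rcons x b) a).
    split; first by rewrite !all_rcons ha hb' hx1.
      by rewrite !permOf_rcons hx2 !mulss.
    by case: ru => _ _; rewrite !size_rcons; lia.
  have rw2 : red w (rcons (rcons x a) b).
    split; first by rewrite !all_rcons ha hb' hx1.
      by rewrite !permOf_rcons hx2 far_id.
    by case: ru => _ _; rewrite !size_rcons; lia.
  have [_ r1] := red_rcons rw1; have [_ r2] := red_rcons rw2.
  rewrite !word_rcons (IH _ _ _ su ru' r1) (IH _ _ _ sv rv' r2) !word_rcons -!mulrA.
  congr (_ * _)%R; apply: hc; [case/andP: hb' => ? ?; lia | case/andP: ha => ? ?; lia | exact: hba].
- subst b; have [h1 h2] := andP ha; have [h3 h4] := andP hb'.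
  exact: (braid_case hb IH h1 h4 su sv ru rv).
- subst a; have [h1 h2] := andP ha; have [h3 h4] := andP hb'.
  symmetry; exact: (braid_case hb IH h3 h2 sv su rv ru).
Qed.

Local Open Scope ring_scope.

Definition Z (A : pzRingType) (t : nat -> A) a b := word t (rev (iota a b)).

Lemma Z0 (A : pzRingType) (t : nat -> A) a : Z t a 0 = 1.
Proof. by rewrite /Z /= word_nil. Qed.

Lemma Z_rec (A : pzRingType) (t : nat -> A) a b : Z t a b.+1 = Z t a.+1 b * t a.
Proof. by rewrite /Z /= rev_cons word_rcons. Qed.

Lemma Z_top (A : pzRingType) (t : nat -> A) a b : Z t a b.+1 = t (a + b)%N * Z t a b.
Proof.
by rewrite /Z -addn1 iotaD rev_cat word_cat /= /word big_cons big_nil mulr1.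
Qed.

Lemma Z_comm_low (A : pzRingType) N (t : nat -> A) (hc : word_far N t) l :
  forall b a, (0 < l)%N -> (l.+1 < a)%N -> (a + b <= N)%N -> t l * Z t a b = Z t a b * t l.
Proof.
elim=> [|b IH] a h0 h1 h2; first by rewrite Z0 mulr1 mul1r.
rewrite Z_rec mulrA IH; try lia.
rewrite -!mulrA; congr (_ * _); apply: hc; lia.
Qed.

Lemma Z_comm_high (A : pzRingType) N (t : nat -> A) (hc : word_far N t) l :
  forall b a, (0 < a)%N -> (a + b < l)%N -> (l <= N)%N -> t l * Z t a b = Z t a b * t l.
Proof.
elim=> [|b IH] a h0 h1 h2; first by rewrite Z0 mulr1 mul1r.
rewrite Z_rec mulrA IH; try lia.
rewrite -!mulrA; congr (_ * _); apply: hc; lia.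
Qed.

Lemma Z_braid (A : pzRingType) N (t : nat -> A) (hb : word_braid N t) (hc : word_far N t) :
  forall b a i, (0 < a)%N -> (a < i < a + b)%N -> (a + b <= N)%N ->
  Z t a b * t i = t i.-1 * Z t a b.
Proof.
elim=> [|b IH] a i h0 h1 h2; first by lia.
case: (eqVneq i a.+1) => [ei|ni].
  subst i; case: b IH h1 h2 => [|b] IH h1 h2; first by lia.
  rewrite Z_rec Z_rec /=.
  have -> : Z t a.+2 b * t a.+1 * t a * t a.+1 = Z t a.+2 b * (t a.+1 * t a * t a.+1)
    by rewrite !mulrA.
  rewrite -hb; last by lia.
  by rewrite !mulrA -(Z_comm_low hc) //; lia.
rewrite Z_rec -mulrA (hc a i); try lia.
by rewrite mulrA IH ?mulrA //; lia.
Qed.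

Lemma word_nseq (A : pzRingType) (t : nat -> A) k x : word t (nseq k x) = t x ^+ k.
Proof.
elim: k => [|k IH]; first by rewrite /= word_nil expr0.
by rewrite /= /word big_cons -/(word t _) IH exprS.
Qed.

Lemma basis_inr n (A : pzRingType) (t : nat -> A) (w : 'S_n) k j :
  basis_elt t (inr (w, k, j)) = word t (redword w) * (t n ^+ k * Z t j (n - j)).
Proof. by rewrite /= /tailword !word_cat word_nseq. Qed.

Lemma Tw_mul m (A : pzRingType) (t : nat -> A) (hb : word_braid m.+1 t) (hc : word_far m.+1 t)
  (hsq : forall i, (0 < i < m.+1)%N -> t i * t i = 0) (w : 'S_m.+1) i : (0 < i < m.+1)%N ->
  word t (redword w) * t i =
  if desc w i then 0 else word t (redword (w * sref m.+1 i)%g).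
Proof.
move=> hi; case: ifP => hd.
  set v := (w * sref m.+1 i)%g.
  have [h1 h2 h3] := redword_red v.
  have r : red w (rcons (redword v) i).
    split; first by rewrite all_rcons hi h1.
      by rewrite permOf_rcons h2 /v mulss.
    by rewrite size_rcons h3 (ninv_desc hi hd).
  by rewrite (matsumoto hb hc (erefl _) (redword_red w) r) word_rcons -mulrA hsq // mulr0.
have [h1 h2 h3] := redword_red w.
have r : red (w * sref m.+1 i)%g (rcons (redword w) i).
  split; first by rewrite all_rcons hi h1.
    by rewrite permOf_rcons h2.
  by rewrite size_rcons h3 (ninv_asc hi (negbT hd)).
by rewrite -word_rcons (matsumoto hb hc (erefl _) r (redword_red _)).
Qed.

Lemma F1X m (A : pzRingType) (t : nat -> A) d (hb : word_braid m.+1 t) (hc : word_far m.+1 t)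
  (hsq : forall i, (0 < i < m.+1)%N -> t i * t i = 0) (w : 'S_m.+1) i k j :
  (0 < i < m.+1)%N -> valid_bindex d (inr (w, k, j)) ->
  word t (redword w) * t i * (t m.+1 ^+ k * Z t j (m.+1 - j)) = 0 \/
  exists b' : bindex m.+1, [/\ valid_bindex d b',
     word t (redword w) * t i * (t m.+1 ^+ k * Z t j (m.+1 - j)) = basis_elt t b' &
     ell b' = (ell (inr (w, k, j) : bindex m.+1)).+1].
Proof.
move=> hi hv; rewrite Tw_mul //; case: ifP => hd; first by left; rewrite mul0r.
right; exists (inr ((w * sref m.+1 i)%g, k, j)); split => //.
  by rewrite basis_inr.
by rewrite /= !coxlen_ninv (ninv_asc hi (negbT hd)); lia.
Qed.

Lemma step m (A : pzRingType) (t : nat -> A) d (hb : word_braid m.+1 t) (hc : word_far m.+1 t)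
  (hsq : forall i, (0 < i < m.+1)%N -> t i * t i = 0) (htop : t m.+1 ^+ d = 0) (hd : (2 <= d)%N)
  (b : bindex m.+1) i :
  valid_bindex d b -> (0 < i <= m.+1)%N ->
  basis_elt t b * t i = 0 \/
  exists b' : bindex m.+1, [/\ valid_bindex d b', basis_elt t b * t i = basis_elt t b' & ell b' = (ell b).+1].
Proof.
have pc : forall l k, (0 < l)%N -> (l.+1 < m.+1)%N -> t l * t m.+1 ^+ k = t m.+1 ^+ k * t l.
  move=> l k h0 h1; apply: commrX; apply: hc; lia.
case: b => [w | [[w k] j]] hv hi.
  case: (eqVneq i m.+1) => [ei|ni].
    subst i; right; exists (inr (w, 1%N, m.+1)); split.
    - by rewrite /=; lia.
    - by rewrite basis_inr subnn Z0 mulr1 expr1.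
    - by rewrite /=; lia.
  have hi' : (0 < i < m.+1)%N by lia.
  rewrite /= Tw_mul //; case: ifP => hd'; first by left.
  right; exists (inl (w * sref m.+1 i)%g); split => //.
  by rewrite /= !coxlen_ninv (ninv_asc hi' (negbT hd')).
have hv0 := hv; case/andP: hv0 => /andP[k0 kd] /andP[j0 jN].

rewrite basis_inr.
case: (eqVneq i m.+1) => [ei|ni].
  subst i; case: (eqVneq j m.+1) => [ej|nj].
    subst j; rewrite subnn Z0 mulr1 -mulrA -exprSr.
    case: (eqVneq k.+1 d) => [ek|nk]; first by left; rewrite ek htop mulr0.
    right; exists (inr (w, k.+1, m.+1)); split.
    - by rewrite /=; lia.
    - by rewrite basis_inr subnn Z0 mulr1.
    - by rewrite /=; lia.
  have e : (m.+1 - j = (m.+1 - j).-1.+1)%N by lia.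
  have e2 : (j + (m.+1 - j).-1 = m)%N by lia.
  rewrite e Z_top e2.
  have hZ : Z t j (m.+1 - j).-1 * t m.+1 = t m.+1 * Z t j (m.+1 - j).-1.
    by rewrite (Z_comm_high hc) //; lia.
  have hm : (0 < m < m.+1)%N by lia.
  case: (eqVneq k 1%N) => [ek|nk].
    subst k.
    have -> : word t (redword w) * (t m.+1 ^+ 1 * (t m * Z t j (m.+1 - j).-1)) * t m.+1
        = word t (redword w) * t m * (t m.+1 ^+ 1 * Z t j (m.+1 - j)).
      rewrite e Z_top e2 expr1 -!mulrA hZ !mulrA.
      congr (_ * _); rewrite -!mulrA; congr (_ * _); rewrite !mulrA.
      by rewrite -(hb m hm).
    exact: (F1X hb hc hsq hm hv).
  have ek : k = (k - 2).+2 by lia.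
  rewrite ek; move: (k - 2)%N => k'.
  left.
  have e1 : t m.+1 * (t m.+1 * (t m * t m.+1)) = t m * t m.+1 * (t m * t m).
    rewrite !mulrA.
    have -> : t m.+1 * t m.+1 * t m * t m.+1 = t m.+1 * (t m.+1 * t m * t m.+1) by rewrite !mulrA.
    by rewrite -(hb m hm) !mulrA -(hb m hm).
  have hP : t m.+1 ^+ k'.+2 * t m * t m.+1 = 0.
    by rewrite !exprSr -!mulrA e1 hsq // !mulr0.
  move: hP; move: (t m.+1 ^+ k'.+2) => P hP.
  rewrite -!mulrA hZ !mulrA.
  have -> : word t (redword w) * P * t m * t m.+1 * Z t j (m.+1 - j).-1
    = word t (redword w) * (P * t m * t m.+1) * Z t j (m.+1 - j).-1 by rewrite !mulrA.
  by rewrite hP mulr0 mul0r.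
have hi' : (0 < i < m.+1)%N by lia.
case: (ltnP i.+1 j) => h1.
  have -> : word t (redword w) * (t m.+1 ^+ k * Z t j (m.+1 - j)) * t i
      = word t (redword w) * t i * (t m.+1 ^+ k * Z t j (m.+1 - j)).
    have hPc : t i * t m.+1 ^+ k = t m.+1 ^+ k * t i by apply: pc; lia.
    have hZc : t i * Z t j (m.+1 - j) = Z t j (m.+1 - j) * t i by apply: (Z_comm_low hc); lia.
    move: hPc; move: (t m.+1 ^+ k) => P hPc.
    by rewrite -!mulrA -hZc !mulrA -(mulrA _ P) -hPc mulrA.
  exact: (F1X hb hc hsq hi' hv).
case: (eqVneq i.+1 j) => [ej|nj].
  subst j; right; exists (inr (w, k, i)); split.
  - by rewrite /=; lia.
  - have e : (m.+1 - i = (m.+1 - i.+1).+1)%N by lia.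
    by rewrite basis_inr e Z_rec !mulrA.
  - by rewrite /=; lia.
case: (eqVneq i j) => [eij|nij].
  subst j; left.
  have e : (m.+1 - i = (m.+1 - i).-1.+1)%N by lia.
  by rewrite e Z_rec -!mulrA hsq // !mulr0.
have hij : (j < i)%N by lia.
have hi1 : (0 < i.-1 < m.+1)%N by lia.
have -> : word t (redword w) * (t m.+1 ^+ k * Z t j (m.+1 - j)) * t i
    = word t (redword w) * t i.-1 * (t m.+1 ^+ k * Z t j (m.+1 - j)).
  have hPc : t i.-1 * t m.+1 ^+ k = t m.+1 ^+ k * t i.-1 by apply: pc; lia.
  have hZb : Z t j (m.+1 - j) * t i = t i.-1 * Z t j (m.+1 - j) by apply: (Z_braid hb hc); lia.
  move: hPc; move: (t m.+1 ^+ k) => P hPc.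
  by rewrite -!mulrA hZb !mulrA -(mulrA _ P) -hPc mulrA.
exact: (F1X hb hc hsq hi1 hv).
Qed.

Inductive Wk (R : comPzRingType) (A : pzRingType) (phi : {rmorphism R -> A}) (t : nat -> A)
  (N k : nat) : A -> Prop :=
| Wk0 : Wk phi t N k 0
| WkD x y : Wk phi t N k x -> Wk phi t N k y -> Wk phi t N k (x + y)
| WkG r u : all (fun i => (0 < i <= N)%N) u -> (k <= size u)%N -> Wk phi t N k (phi r * word t u).

Lemma Wk_mul (R : comPzRingType) (A : pzRingType) (phi : {rmorphism R -> A}) (t : nat -> A) N
  (hcen : central_map phi) j k x y :
  Wk phi t N j x -> Wk phi t N k y -> Wk phi t N (j + k) (x * y).
Proof.
move=> hx hy; elim: hx => [|x1 x2 _ IH1 _ IH2|r u hu hsu].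
- by rewrite mul0r; constructor.
- by rewrite mulrDl; constructor.
elim: hy => [|y1 y2 _ IH1 _ IH2|r' u' hu' hsu'].
- by rewrite mulr0; constructor.
- by rewrite mulrDr; constructor.
have -> : phi r * word t u * (phi r' * word t u') = phi (r * r') * word t (u ++ u').
  rewrite rmorphM word_cat !mulrA; congr (_ * _).
  by rewrite -!mulrA (hcen r' (word t u)).
constructor; first by rewrite all_cat hu hu'.
by rewrite size_cat; lia.
Qed.

Lemma Wk_sum (R : comPzRingType) (A : pzRingType) (phi : {rmorphism R -> A}) (t : nat -> A) N k
  (c : seq (R * seq nat)) :
  all (fun p => all (fun i => (0 < i <= N)%N) p.2) c -> (forall p, p \in c -> k <= size p.2)%N ->
  Wk phi t N k (\sum_(p <- c) phi p.1 * word t p.2).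
Proof.
elim: c => [|p c IH] /=; first by rewrite big_nil; constructor.
move=> /andP[hp hc] hs; rewrite big_cons; constructor.
  by constructor => //; apply: hs; rewrite inE eqxx.
by apply: IH => // q hq; apply: hs; rewrite inE hq orbT.
Qed.

Lemma Wk_zero (R : comPzRingType) (A : pzRingType) (phi : {rmorphism R -> A}) (t : nat -> A) N k x :
  (forall u, all (fun i => (0 < i <= N)%N) u -> (k <= size u)%N -> word t u = 0) ->
  Wk phi t N k x -> x = 0.
Proof.
move=> h; elim => [//|x1 x2 _ -> _ ->|r u hu hs]; first by rewrite addr0.
by rewrite h // mulr0.
Qed.

Lemma gen_Wk (R : comPzRingType) (A : pzRingType) (phi : {rmorphism R -> A}) (t : nat -> A) N
  (hcen : central_map phi) (hspan : forall a : A, exists c : seq (R * seq nat),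
          all (fun p => all (fun i => (0 < i <= N)%N) p.2) c /\
          a = \sum_(p <- c) phi p.1 * word t p.2) x :
  gen_ideal N t x -> Wk phi t N 1 x.
Proof.
have W0 : forall a, Wk phi t N 0 a.
  move=> a; have [c [hc ->]] := hspan a; by apply: Wk_sum.
case=> s [hs ->]; elim: s hs => [|p s IH] hs; first by rewrite big_nil; constructor.
rewrite big_cons; constructor; last by apply: IH => q hq; apply: hs; right.
have hti : Wk phi t N 1 (t p.1.2).
  have -> : t p.1.2 = phi 1 * word t [:: p.1.2] by rewrite rmorph1 mul1r /word big_seq1.
  constructor => //=; rewrite andbT; apply: hs; by left.
by have := Wk_mul hcen (Wk_mul hcen (W0 p.1.1) hti) (W0 p.2).
Qed.

Lemma pow_Wk (R : comPzRingType) (A : pzRingType) (phi : {rmorphism R -> A}) (t : nat -> A) N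
  (hcen : central_map phi) (I : A -> Prop) (hI : forall x, I x -> Wk phi t N 1 x) :
  forall xs : seq A, (forall y, List.In y xs -> I y) -> Wk phi t N (size xs) (\prod_(y <- xs) y).
Proof.
elim=> [|y xs IH] h /=.
  rewrite big_nil; have -> : (1 : A) = phi 1 * word t [::] by rewrite rmorph1 word_nil mulr1.
  by constructor.
rewrite big_cons; have := Wk_mul hcen (hI y (h y (or_introl erefl))) (IH (fun z hz => h z (or_intror hz))).
by rewrite add1n.
Qed.

Lemma ideal_pow_Wk (R : comPzRingType) (A : pzRingType) (phi : {rmorphism R -> A}) (t : nat -> A) N
  (hcen : central_map phi) (I : A -> Prop) (hI : forall x, I x -> Wk phi t N 1 x) K x :
  ideal_pow I K x -> Wk phi t N K x.
Proof.
case=> s [hs ->]; elim: s hs => [|xs s IH] hs; first by rewrite big_nil; constructor.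
rewrite big_cons; constructor; last by apply: IH => q hq; apply: hs; right.
have [hsz hin] := hs xs (or_introl erefl).
by rewrite -hsz; apply: (pow_Wk hcen hI).
Qed.

Lemma geom (A : pzRingType) (v : A) K : (\sum_(i < K) v ^+ i) * (1 - v) = 1 - v ^+ K.
Proof.
elim: K => [|K IH]; first by rewrite big_ord0 mul0r expr0 subrr.
rewrite big_ord_recr /= mulrDl IH mulrBr mulr1 exprSr.
by rewrite addrA subrK.
Qed.

Lemma nil_inv (A : pzRingType) (y : A) K : y ^+ K = 0 ->
  (\sum_(i < K) (- y) ^+ i) * (1 + y) = 1.
Proof.
move=> hy; have := geom (- y) K; rewrite opprK => ->.
by rewrite exprNn hy mulr0 subr0.
Qed.

Lemma gen0 (A : pzRingType) N (t : nat -> A) : gen_ideal N t 0.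
Proof. by exists [::]; split => //; rewrite big_nil. Qed.

Lemma gen_add (A : pzRingType) N (t : nat -> A) x y :
  gen_ideal N t x -> gen_ideal N t y -> gen_ideal N t (x + y).
Proof.
case=> s [hs ->] hy; elim: s hs => [|p s IH] hs; first by rewrite big_nil add0r.
have [s' [hs' e]] := IH (fun q hq => hs q (or_intror hq)).
exists (p :: s'); split.
  by move=> q [<-|hq]; [apply: hs; left | apply: hs'].
by rewrite !big_cons -addrA e.
Qed.

Lemma gen_lmul (A : pzRingType) N (t : nat -> A) a x :
  gen_ideal N t x -> gen_ideal N t (a * x).
Proof.
case=> s [hs ->]; elim: s hs => [|p s IH] hs; first by rewrite big_nil mulr0; apply: gen0.
have [s' [hs' e]] := IH (fun q hq => hs q (or_intror hq)).
exists ((a * p.1.1, p.1.2, p.2) :: s'); split.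
  by move=> q [<-|hq]; [apply: (hs p); left | apply: hs'].
by rewrite !big_cons mulrDr e !mulrA.
Qed.

Lemma gen_single (A : pzRingType) N (t : nat -> A) a i b : (0 < i <= N)%N ->
  gen_ideal N t (a * t i * b).
Proof.
by move=> hi; exists [:: (a, i, b)]; split; [move=> q [<-|[]] | rewrite big_seq1].
Qed.

Lemma gen_left (A : pzRingType) N (t : nat -> A) : left_ideal (gen_ideal N t).
Proof. split; [exact: gen0 | exact: gen_add | exact: gen_lmul]. Qed.

Lemma gen_f (R : comPzRingType) (A : pzRingType) N (t : nat -> A) (f : {rmorphism A -> R}) :
  (forall i, (0 < i <= N)%N -> f (t i) = 0) -> forall x, gen_ideal N t x -> f x = 0.
Proof.
move=> hf x [s [hs ->]]; elim: s hs => [|p s IH] hs; first by rewrite big_nil rmorph0.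
rewrite big_cons rmorphD IH; last by move=> q hq; apply: hs; right.
by rewrite !rmorphM hf ?mulr0 ?mul0r ?addr0 //; apply: hs; left.
Qed.

Lemma decomp (R : comPzRingType) (A : pzRingType) (phi : {rmorphism R -> A}) (t : nat -> A) N
  (c : seq (R * seq nat)) :
  all (fun p => all (fun i => (0 < i <= N)%N) p.2) c ->
  exists r y, gen_ideal N t y /\ \sum_(p <- c) phi p.1 * word t p.2 = phi r + y.
Proof.
elim: c => [|p c IH] /=.
  by exists 0, 0; split; [apply: gen0 | rewrite big_nil rmorph0 addr0].
move=> /andP[hp hc]; have [r [y [hy e]]] := IH hc.
rewrite big_cons e; case: p hp => r0 [|i u] /= hp.
  exists (r0 + r), y; split => //.
  by rewrite word_nil mulr1 rmorphD addrA.
exists r, (phi r0 * t i * word t u + y); split.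
  apply: gen_add => //; apply: gen_single; by case/andP: hp.
rewrite /word big_cons -/(word t u) !mulrA addrA (addrC (phi r0 * _ * _)) -addrA.
by [].
Qed.

Lemma local_gen (R : comPzRingType) (A : pzRingType) (phi : {rmorphism R -> A}) (t : nat -> A) N
  (hspan : forall a : A, exists c : seq (R * seq nat),
          all (fun p => all (fun i => (0 < i <= N)%N) p.2) c /\
          a = \sum_(p <- c) phi p.1 * word t p.2)
  (f : {rmorphism A -> R}) (hfphi : forall r, f (phi r) = r)
  (hft : forall i, (0 < i <= N)%N -> f (t i) = 0)
  (hR1 : (1 : R) != 0) (hinv : forall x : R, x != 0 -> exists y, y * x = 1)
  (hnil : forall y, gen_ideal N t y -> exists K, y ^+ K = 0) :
  local_with_max (gen_ideal N t).
Proof.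
have dec : forall a, exists r y, gen_ideal N t y /\ a = phi r + y.
  by move=> a; have [c [hc ->]] := hspan a; apply: decomp.
have fgen : forall x, f x = 0 -> gen_ideal N t x.
  move=> x; have [r [y [hy ->]]] := dec x.
  by rewrite rmorphD hfphi (gen_f hft hy) addr0 => ->; rewrite rmorph0 add0r.
have not1 : ~ gen_ideal N t 1.
  by move=> h; move: (gen_f hft h); rewrite rmorph1; apply/eqP.
have key : forall J : A -> Prop, left_ideal J -> forall x, J x -> f x != 0 ->
    exists z, gen_ideal N t z /\ J (1 + z).
  move=> J [J0 JD JM] x hx hfx; have [r [y [hy ex]]] := dec x.
  have hr : r != 0 by move: hfx; rewrite ex rmorphD hfphi (gen_f hft hy) addr0.
  have [r' hr'] := hinv r hr.
  exists (phi r' * y); split; first exact: gen_lmul.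
  have := JM (phi r') x hx; rewrite ex mulrDr -rmorphM hr' rmorph1.
  by [].
have lg := gen_left N t.
split.
  split => // J hJ hJ1 hsub x hx.
  case: (eqVneq (f x) 0) => [/fgen //|hfx].
  have [z [hz hJz]] := key J hJ x hx hfx.
  case: hJ => J0 JD JM; exfalso; apply: hJ1.
  have := JD _ _ hJz (JM (-1) z (hsub z hz)).
  by rewrite mulN1r addrK.
move=> J [hJ hJ1 hmax].
have sub : forall x, J x -> gen_ideal N t x.
  move=> x hx; case: (eqVneq (f x) 0) => [/fgen //|hfx].
  have [z [hz hJz]] := key J hJ x hx hfx.
  have [K hK] := hnil z hz.
  case: hJ => J0 JD JM; exfalso; apply: hJ1.
  by have := JM (\sum_(i < K) (- z) ^+ i) _ hJz; rewrite nil_inv.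
move=> x; split; first exact: sub.
exact: (hmax _ lg not1 sub x).
Qed.

Lemma prod_nseq (A : pzRingType) (y : A) K : \prod_(z <- nseq K y) z = y ^+ K.
Proof.
elim: K => [|K IH]; first by rewrite big_nil expr0.
by rewrite /= big_cons IH exprS.
Qed.

Unset Implicit Arguments.

Theorem theoremC (R : comPzRingType) (n d : nat) (hn : (1 <= n)%N) (hd : (2 <= d)%N)
  (A : pzRingType) (phi : {rmorphism R -> A}) (t : nat -> A)
  (hA : is_NC_A n d phi t) :
  (* (1) *)
  (forall u : seq nat, all (fun i => (0 < i <= n)%N) u -> word t u != 0 ->
     exists b : bindex n,
       [/\ valid_bindex d b, word t u = basis_elt t b & ell b = size u]) /\
  (* (2) *)
  ([/\ valid_bindex d (top_bindex n d),
       ell (top_bindex n d) = lnd n d,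
       (forall b : bindex n, valid_bindex d b -> (ell b <= lnd n d)%N),
       (forall b : bindex n, valid_bindex d b -> ell b = lnd n d -> b = top_bindex n d) &
       (forall u : seq nat, all (fun i => (0 < i <= n)%N) u -> word t u != 0 ->
          (size u <= lnd n d)%N)]) /\
  (* (3) *)
  (((1 : R) != 0 /\ (forall x : R, x != 0 -> exists y, y * x = 1)) ->
     local_with_max (gen_ideal n t)) /\
  (forall x : A, ideal_pow (gen_ideal n t) (1 + lnd n d) x -> x = 0).
Proof.
case: n hn hA => [//|m] _ hA.
have [hcen [hb hc hsq htop] hspan huniv] := hA.
have wb : forall u, all (fun i => (0 < i <= m.+1)%N) u -> word t u = 0 \/
    exists b : bindex m.+1, [/\ valid_bindex d b, word t u = basis_elt t b & ell b = size u].
  elim/last_ind => [|u i IH].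
    move=> _; right; exists (inl 1%g); split => //=.
      have [_ _] := redword_red (1%g : 'S_m.+1); rewrite ninv1 => /size0nil ->.
      by rewrite word_nil.
    by rewrite coxlen_ninv ninv1.
  rewrite all_rcons => /andP[hi hu]; case: (IH hu) => [h0|[b [hv e el]]].
    by left; rewrite word_rcons h0 mul0r.
  rewrite word_rcons e; case: (step hb hc hsq htop hd hv hi) => [->|[b' [hv' e' el']]].
    by left.
  by right; exists b'; split => //; rewrite size_rcons el' el.
have hmax : forall w : 'S_m.+1, (coxlen w <= coxlen (longest m.+1))%N.
  by move=> w; rewrite !coxlen_ninv longest_max.
have ell_le : forall b : bindex m.+1, valid_bindex d b -> (ell b <= lnd m.+1 d)%N.
  case=> [w|[[w k] j]] /= hv; have := hmax w; rewrite /lnd; lia.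
have p1 : forall u : seq nat, all (fun i => (0 < i <= m.+1)%N) u -> word t u != 0 ->
     exists b : bindex m.+1,
       [/\ valid_bindex d b, word t u = basis_elt t b & ell b = size u].
  move=> u hu hnz; case: (wb u hu) => [h|//]; by rewrite h eqxx in hnz.
have psz : forall u : seq nat, all (fun i => (0 < i <= m.+1)%N) u -> word t u != 0 ->
          (size u <= lnd m.+1 d)%N.
  move=> u hu hnz; have [b [hv _ <-]] := p1 u hu hnz; exact: ell_le.
have p3b : forall x : A, ideal_pow (gen_ideal m.+1 t) (1 + lnd m.+1 d) x -> x = 0.
  move=> x hx; have hW := ideal_pow_Wk hcen (gen_Wk hcen hspan) hx.
  apply: (Wk_zero _ hW) => u hu hs.
  case: (eqVneq (word t u) 0) => // hnz; have := psz u hu hnz; lia.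
split => //.
split; last split => //.
- split.
  + by rewrite /=; lia.
  + by rewrite /= /lnd; lia.
  + exact: ell_le.
  + case=> [w|[[w k] j]] /= hv; have := hmax w; rewrite /lnd.
      lia.
    move=> hw he.
    have ew : coxlen w = coxlen (longest m.+1) by lia.
    rewrite !coxlen_ninv in ew; have -> := longest_uniq ew.
    rewrite /top_bindex; congr (inr (_, _, _)); lia.
  + exact: psz.
- move=> [hR1 hinv].
  have hcen' : central_map (idfun : {rmorphism R -> R}) by move=> r x; rewrite mulrC.
  have hrels' : NC_rels m.+1 d (fun _ => 0 : R).
    split => [i _|i j _ _ _|i _|]; rewrite ?mulr0 //.
    by rewrite expr0n; have /negbTE -> : d != 0%N by lia.
  have [f [hf1 hf2]] := huniv R idfun (fun _ => 0) hcen' hrels'.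
  apply: (local_gen hspan (f := f)) => //.
  move=> y hy; exists (1 + lnd m.+1 d)%N; apply: p3b.
  exists [:: nseq (1 + lnd m.+1 d) y]; split; last by rewrite big_seq1 prod_nseq.
  move=> xs [<-|[]]; split; first by rewrite size_nseq.
  move=> z; elim: (1 + lnd m.+1 d)%N => [//|K IH] /= [<-//|hz]; exact: IH.
Qed.
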